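(* Let $R$ be an arbitrary unital associative ring and let $$ A=\left(\begin{array}{ccc} 1&1&1\\ 1&a&b\\ 1&c&d \end{array}\right)\in M_3(R) \quad \text{and}\quad B=\left(\begin{array}{cc} a-1&b-1\\ c-1&d-1 \end{array}\right)\in M_2(R). $$ Then $A$ is invertible if and only if $B$ is invertible. Moreover, if $B$ is invertible and $$ B^{-1}=\left(\begin{array}{cc} s&t\\ u&v \end{array}\right), $$ then the inverse of $A$ is given by the formula $$ A^{-1}=\left(\begin{array}{ccc} 1+s+t+u+v&-s-u&-t-v\\ -s-t&s&t\\ -u-v&u&v \end{array}\right). $$ Furthermore, if $a-1$, $b-1$, $c-1$ and $d-1$ are invertible, then $s$, $t$, $u$ and $v$ are given by $$ \begin{array}{ll} s=((a-1)-(b-1)(d-1)^{-1}(c-1))^{-1},&\ \ \ t=((c-1)-(d-1)(b-1)^{-1}(a-1))^{-1}, \\ u=((b-1)-(a-1)(c-1)^{-1}(d-1))^{-1},&\ \ \ v=((d-1)-(c-1)(a-1)^{-1}(b-1))^{-1} \end{array} $$ (thus providing an explicit expression of $A^{-1}$ in terms of $a$, $b$, $c$ and $d$).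
   Context: $R$ is an arbitrary unital associative ring, $M_n(R)$ denotes $n\times n$ matrices over $R$. The matrix $A$ is a $3\times 3$ matrix whose first row and first column consist of $1$'s (i.e. $A$ lies in the set of $3\times 3$ matrices with all entries of the first row and first column equal to $1$). *)

(* Defs.v *)
From HB Require Import structures.
From mathcomp Require Import all_boot all_order all_algebra.
Set Implicit Arguments. Unset Strict Implicit. Unset Printing Implicit Defensive.
Import GRing.Theory.
Local Open Scope ring_scope.

Definition el_inverse (R : pzRingType) (x y : R) : Prop := x * y = 1 /\ y * x = 1.

Definition mx_inverse (R : pzRingType) (n : nat) (X Y : 'M[R]_n) : Prop :=
  X *m Y = 1%:M /\ Y *m X = 1%:M.

Definition mx_invertible (R : pzRingType) (n : nat) (X : 'M[R]_n) : Prop :=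
  exists Y, mx_inverse X Y.

Definition mx3 (R : pzRingType) (x11 x12 x13 x21 x22 x23 x31 x32 x33 : R) : 'M[R]_3 :=
  \matrix_(i < 3, j < 3)
    nth 0 (nth [::] [:: [:: x11; x12; x13]; [:: x21; x22; x23]; [:: x31; x32; x33]] i) j.

Definition mx2 (R : pzRingType) (x11 x12 x21 x22 : R) : 'M[R]_2 :=
  \matrix_(i < 2, j < 2) nth 0 (nth [::] [:: [:: x11; x12]; [:: x21; x22]] i) j.

(* Main.v *)
Require Import Defs.
From HB Require Import structures.
From mathcomp Require Import all_boot all_order all_algebra.
Import GRing.Theory.
Local Open Scope ring_scope.
Lemma mul3 {R : pzRingType} (x11 x12 x13 x21 x22 x23 x31 x32 x33 y11 y12 y13 y21 y22 y23 y31 y32 y33 : R) :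
  mx3 x11 x12 x13 x21 x22 x23 x31 x32 x33 *m mx3 y11 y12 y13 y21 y22 y23 y31 y32 y33 =
  mx3 (x11*y11+x12*y21+x13*y31) (x11*y12+x12*y22+x13*y32) (x11*y13+x12*y23+x13*y33)
      (x21*y11+x22*y21+x23*y31) (x21*y12+x22*y22+x23*y32) (x21*y13+x22*y23+x23*y33)
      (x31*y11+x32*y21+x33*y31) (x31*y12+x32*y22+x33*y32) (x31*y13+x32*y23+x33*y33).
Proof.
apply/matrixP=> i j; rewrite /mx3 !mxE !big_ord_recr big_ord0 /= add0r !mxE /=.
by case: i j => [[|[|[|?]]] ?] [[|[|[|?]]] ?].
Qed.

Lemma mul2 {R : pzRingType} (x11 x12 x21 x22 y11 y12 y21 y22 : R) :
  mx2 x11 x12 x21 x22 *m mx2 y11 y12 y21 y22 =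
  mx2 (x11*y11+x12*y21) (x11*y12+x12*y22) (x21*y11+x22*y21) (x21*y12+x22*y22).
Proof.
apply/matrixP=> i j; rewrite /mx2 !mxE !big_ord_recr big_ord0 /= add0r !mxE /=.
by case: i j => [[|[|?]] ?] [[|[|?]] ?].
Qed.

Lemma id3 {R : pzRingType} : (1%:M : 'M[R]_3) = mx3 1 0 0 0 1 0 0 0 1.
Proof. by apply/matrixP=> i j; rewrite /mx3 !mxE; case: i j => [[|[|[|?]]] ?] [[|[|[|?]]] ?]. Qed.
Lemma id2 {R : pzRingType} : (1%:M : 'M[R]_2) = mx2 1 0 0 1.
Proof. by apply/matrixP=> i j; rewrite /mx2 !mxE; case: i j => [[|[|?]] ?] [[|[|?]] ?]. Qed.

Definition o3 (k : nat) (h : (k < 3)%N) : 'I_3 := Ordinal h.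
Lemma eta3 {R : pzRingType} (X : 'M[R]_3) : X = mx3 (X (@o3 0 isT) (@o3 0 isT)) (X (@o3 0 isT) (@o3 1 isT)) (X (@o3 0 isT) (@o3 2 isT))
  (X (@o3 1 isT) (@o3 0 isT)) (X (@o3 1 isT) (@o3 1 isT)) (X (@o3 1 isT) (@o3 2 isT))
  (X (@o3 2 isT) (@o3 0 isT)) (X (@o3 2 isT) (@o3 1 isT)) (X (@o3 2 isT) (@o3 2 isT)).
Proof. apply/matrixP=> i j; rewrite /mx3 !mxE; case: i j => [[|[|[|?]]] ?] [[|[|[|?]]] ?] //=; congr (X _ _); exact: val_inj. Qed.
Definition o2 (k : nat) (h : (k < 2)%N) : 'I_2 := Ordinal h.
Lemma eta2 {R : pzRingType} (X : 'M[R]_2) : X = mx2 (X (@o2 0 isT) (@o2 0 isT)) (X (@o2 0 isT) (@o2 1 isT))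
  (X (@o2 1 isT) (@o2 0 isT)) (X (@o2 1 isT) (@o2 1 isT)).
Proof. apply/matrixP=> i j; rewrite /mx2 !mxE; case: i j => [[|[|?]] ?] [[|[|?]] ?] //=; congr (X _ _); exact: val_inj. Qed.

Lemma inj3 {R : pzRingType} {x11 x12 x13 x21 x22 x23 x31 x32 x33 y11 y12 y13 y21 y22 y23 y31 y32 y33 : R} :
  mx3 x11 x12 x13 x21 x22 x23 x31 x32 x33 = mx3 y11 y12 y13 y21 y22 y23 y31 y32 y33 :> 'M[R]_3 ->
  x11 = y11 /\ x12 = y12 /\ x13 = y13 /\ x21 = y21 /\ x22 = y22 /\ x23 = y23 /\ x31 = y31 /\ x32 = y32 /\ x33 = y33.
Proof.
move=> H; have E := fun i j => congr1 (fun M : 'M[R]_3 => M i j) H.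
move: (E (@o3 0 isT) (@o3 0 isT)) (E (@o3 0 isT) (@o3 1 isT)) (E (@o3 0 isT) (@o3 2 isT))
  (E (@o3 1 isT) (@o3 0 isT)) (E (@o3 1 isT) (@o3 1 isT)) (E (@o3 1 isT) (@o3 2 isT))
  (E (@o3 2 isT) (@o3 0 isT)) (E (@o3 2 isT) (@o3 1 isT)) (E (@o3 2 isT) (@o3 2 isT)).
by rewrite /mx3 !mxE /= => *; do ! split.
Qed.
Lemma inj2 {R : pzRingType} {x11 x12 x21 x22 y11 y12 y21 y22 : R} :
  mx2 x11 x12 x21 x22 = mx2 y11 y12 y21 y22 :> 'M[R]_2 ->
  [/\ x11 = y11, x12 = y12, x21 = y21 & x22 = y22].
Proof.
move=> H; have E := fun i j => congr1 (fun M : 'M[R]_2 => M i j) H.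
move: (E (@o2 0 isT) (@o2 0 isT)) (E (@o2 0 isT) (@o2 1 isT))
  (E (@o2 1 isT) (@o2 0 isT)) (E (@o2 1 isT) (@o2 1 isT)).
by rewrite /mx2 !mxE /=.
Qed.

Lemma conj_inv (R : pzRingType) n (A Y P Pi Q Qi : 'M[R]_n) : P *m Pi = 1%:M -> Pi *m P = 1%:M ->
  Q *m Qi = 1%:M -> Qi *m Q = 1%:M -> mx_inverse A Y -> mx_inverse (Pi *m A *m Qi) (Q *m Y *m P).
Proof.
move=> h1 h2 h3 h4 [h5 h6]; split.
  by rewrite !mulmxA -(mulmxA (Pi *m A) Qi Q) h4 mulmx1 -(mulmxA Pi A Y) h5 mulmx1 h2.
by rewrite !mulmxA -(mulmxA (Q *m Y) P Pi) h1 mulmx1 -(mulmxA Q Y A) h6 mulmx1 h3.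
Qed.

Lemma L1 (R : pzRingType) (X Y Z S W P i : R) : i * W = 1 -> Z * S + W * P = 0 -> X * S + Y * P = 1 ->
  (X - Y * i * Z) * S = 1.
Proof.
move=> h1 h2 h3; have : Z * S = - (W * P) by rewrite -[LHS](addrK (W * P)) h2 sub0r.
move=> e; by rewrite mulrBl -(mulrA (Y * i) Z S) e mulrN opprK mulrA -(mulrA Y) h1 mulr1 h3.
Qed.
Lemma L2 (R : pzRingType) (X Y Z S W P i : R) : W * i = 1 -> S * Y + P * W = 0 -> S * X + P * Z = 1 ->
  S * (X - Y * i * Z) = 1.
Proof.
move=> h1 h2 h3; have : S * Y = - (P * W) by rewrite -[LHS](addrK (P * W)) h2 sub0r.
move=> e; by rewrite mulrBr !mulrA e !mulNr opprK -(mulrA P) h1 mulr1 h3.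
Qed.

Arguments L1 {R X Y Z S W P i}.
Arguments L2 {R X Y Z S W P i}.

Theorem lemma5 (R : pzRingType) (a b c d : R) :
  let A := mx3 1 1 1 1 a b 1 c d in
  let B := mx2 (a - 1) (b - 1) (c - 1) (d - 1) in
  (mx_invertible A <-> mx_invertible B) /\
  (forall s t u v : R, mx_inverse B (mx2 s t u v) ->
     mx_inverse A (mx3 (1 + s + t + u + v) (- s - u) (- t - v)
                       (- s - t)           s         t
                       (- u - v)           u         v)) /\
  (forall s t u v : R, mx_inverse B (mx2 s t u v) ->
   forall ia ib ic id : R,
     el_inverse (a - 1) ia -> el_inverse (b - 1) ib ->
     el_inverse (c - 1) ic -> el_inverse (d - 1) id ->
     [/\ el_inverse ((a - 1) - (b - 1) * id * (c - 1)) s,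
         el_inverse ((c - 1) - (d - 1) * ib * (a - 1)) t,
         el_inverse ((b - 1) - (a - 1) * ic * (d - 1)) u &
         el_inverse ((d - 1) - (c - 1) * ia * (b - 1)) v]).
Proof.
move=> A B.
have Beq : forall s t u v, mx_inverse B (mx2 s t u v) ->
   [/\ (a-1)*s + (b-1)*u = 1, (a-1)*t + (b-1)*v = 0, (c-1)*s + (d-1)*u = 0, (c-1)*t + (d-1)*v = 1 &
   [/\ s*(a-1) + t*(c-1) = 1, s*(b-1) + t*(d-1) = 0, u*(a-1) + v*(c-1) = 0 & u*(b-1) + v*(d-1) = 1]].
  move=> s t u v []; rewrite /B !mul2 id2 => /inj2[? ? ? ?] /inj2[? ? ? ?]; by split.
pose L : 'M[R]_3 := mx3 1 0 0 1 1 0 1 0 1.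
pose Li : 'M[R]_3 := mx3 1 0 0 (-1) 1 0 (-1) 0 1.
pose U : 'M[R]_3 := mx3 1 1 1 0 1 0 0 0 1.
pose Ui : 'M[R]_3 := mx3 1 (-1) (-1) 0 1 0 0 0 1.
pose M : 'M[R]_3 := mx3 1 0 0 0 (a-1) (b-1) 0 (c-1) (d-1).
have hL1 : L *m Li = 1%:M.
  rewrite /L /Li mul3 id3; congr mx3; rewrite ?(mul0r, mulr0, mul1r, mulr1, add0r, addr0, addrN, addNr) //.
have hL2 : Li *m L = 1%:M.
  rewrite /L /Li mul3 id3; congr mx3; rewrite ?(mul0r, mulr0, mul1r, mulr1, mulN1r, add0r, addr0, addrN, addNr) //.
have hU1 : U *m Ui = 1%:M.
  rewrite /U /Ui mul3 id3; congr mx3; rewrite ?(mul0r, mulr0, mul1r, mulr1, add0r, addr0, addrN, addNr) //.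
have hU2 : Ui *m U = 1%:M.
  rewrite /U /Ui mul3 id3; congr mx3; rewrite ?(mul0r, mulr0, mul1r, mulr1, mulN1r, add0r, addr0, addrN, addNr) //.
have hA : A = L *m M *m U.
  rewrite /A /L /M /U !mul3; congr mx3; rewrite ?(mul0r, mulr0, mul1r, mulr1, add0r, addr0, subrKC) //.
have hM : M = Li *m A *m Ui.
  by rewrite hA !mulmxA hL2 mul1mx -mulmxA hU1 mulmx1.
have P2 : forall s t u v : R, mx_inverse B (mx2 s t u v) ->
     mx_inverse A (mx3 (1 + s + t + u + v) (- s - u) (- t - v)
                       (- s - t)           s         t
                       (- u - v)           u         v).
  move=> s t u v /Beq [e1 e2 e3 e4 [e5 e6 e7 e8]].
  have hM' : mx_inverse M (mx3 1 0 0 0 s t 0 u v).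
    split; rewrite /M mul3 id3; congr mx3;
      rewrite ?(mul0r, mulr0, mul1r, mulr1, add0r, addr0) //.
  have := @conj_inv _ _ _ _ _ _ _ _ hL2 hL1 hU2 hU1 hM'.
  rewrite -hA.
  have -> : Ui *m mx3 1 0 0 0 s t 0 u v *m Li = mx3 (1 + s + t + u + v) (- s - u) (- t - v)
                       (- s - t)           s         t
                       (- u - v)           u         v.
    rewrite /Ui /Li !mul3; congr mx3;
      rewrite ?(mul0r, mulr0, mul1r, mulr1, mulrN1, mulN1r, add0r, addr0, opprK, opprD, oppr0, sub0r, subr0, add0r, addr0) //.
    by rewrite !addrA (addrAC _ u t).
  by apply.
split; last split; [|exact: P2|].
  split.
    case=> Y hY; have := @conj_inv _ _ _ _ _ _ _ _ hL1 hL2 hU1 hU2 hY.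
    rewrite -hM; set Z := U *m Y *m L; rewrite (eta3 Z).
    case=> h1 h2; move: h1 h2; rewrite /M !mul3 id3 => h1 h2.
    move/inj3: h1 => [_ [_ [_ [_ [e5 [e6 [_ [e8 e9]]]]]]]].
    move/inj3: h2 => [_ [_ [_ [_ [f5 [f6 [_ [f8 f9]]]]]]]].
    rewrite !mul0r !add0r in e5 e6 e8 e9.
    rewrite !mulr0 !add0r in f5 f6 f8 f9.
    exists (mx2 (Z (o3 1 isT) (o3 1 isT)) (Z (o3 1 isT) (o3 2 isT)) (Z (o3 2 isT) (o3 1 isT)) (Z (o3 2 isT) (o3 2 isT))); split; rewrite /B mul2 id2; by congr mx2.
  case=> Y; rewrite (eta2 Y) => /P2 h; eexists; exact: h.
move=> s t u v /Beq [e1 e2 e3 e4 [e5 e6 e7 e8]] ia ib ic id [ha1 ha2] [hb1 hb2] [hc1 hc2] [hd1 hd2].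
split; split.
- exact: (L1 hd2 e3 e1).
- exact: (L2 hd1 e6 e5).
- exact: (L1 hb2 e2 e4).
- by apply: (L2 (P := s) hb1); rewrite addrC.
- by apply: (L1 (P := s) hc2); rewrite addrC.
- exact: (L2 hc1 e7 e8).
- by apply: (L1 (P := t) ha2); rewrite addrC.
- by apply: (L2 (P := u) ha1); rewrite addrC.
Qed.
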